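(* For all positive integers $n$ and $k$, $$\sum_{i=1}^{k}(-1)^i\binom{ni+k-1}{k}\binom{k+1}{i+1}=(-1)^k\binom{n}{k}.$$
   Context: Binomial coefficients $\binom{m}{j}$ for nonnegative integers $m,j$ are the usual ones, with $\binom{m}{j}=0$ when $j>m$. *)

(* Defs.v *)
From mathcomp Require Import all_boot all_order all_algebra.

(* Main.v *)
Require Import Defs.
From mathcomp Require Import all_boot all_order all_algebra zify ring.
Import GRing.Theory.

Lemma prod_rise k : forall a, 0 < a -> \prod_(t < k) (a + t) = (a + k - 1) ^_ k.
Proof.
elim: k => [|k IH] a ha; first by rewrite big_ord0 ffactn0.
rewrite big_ord_recl /= addn0.
under eq_bigr => i _ do rewrite /bump /= add1n addnS -addSn.
rewrite IH // (_ : a.+1 + k - 1 = a + k); last by lia.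
rewrite (_ : a + k.+1 - 1 = a + k); last by lia.
by rewrite ffactnSr mulnC (_ : a + k - k = a) //; lia.
Qed.

Local Open Scope ring_scope.
Lemma prod_neg (n k : nat) : \prod_(t < k) (n%:Z - t%:Z) = (n ^_ k)%N%:Z.
Proof.
elim: k => [|k IH]; first by rewrite big_ord0 ffactn0.
rewrite big_ord_recr /= IH ffactnSr PoszM.
case: (leqP k n) => hk; first by rewrite subzn.
by rewrite ffact_small // mul0r.
Qed.
Definition S (m : nat) (f : nat -> int) : int :=
  \sum_(j < m.+1) (-1) ^+ j * ('C(m, j))%:Z * f j.

Lemma Srec m f : S m.+1 f = S m f - S m (fun j => f j.+1).
Proof.
rewrite /S big_ord_recl /= bin0 expr0 mul1r.
under eq_bigr => i _ do rewrite /bump /= add1n binS PoszD mulrDr mulrDl.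
rewrite big_split /= addrA; congr (_ + _).
  rewrite [in RHS]big_ord_recl /= bin0 expr0 mul1r; congr (_ + _).
  rewrite big_ord_recr /= bin_small // mulr0 mul0r addr0.
  by apply: eq_bigr => i _.
rewrite -sumrN; apply: eq_bigr => i _.
by rewrite exprS mulN1r !mulNr.
Qed.

Lemma Slin m N (c : nat -> int) (g : nat -> nat -> int) :
  S m (fun j => \sum_(e < N) c e * g e j) = \sum_(e < N) c e * S m (g e).
Proof.
rewrite /S.
under eq_bigr => j _ do rewrite big_distrr /=.
rewrite exchange_big /=; apply: eq_bigr => e _.
rewrite big_distrr /=; apply: eq_bigr => j _.
by rewrite mulrCA.
Qed.

Lemma Smono m d : (d < m)%N -> S m (fun j => (j%:Z) ^+ d) = 0.
Proof.
elim: m d => [|m IH] d // hd.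
rewrite Srec.
have -> : S m (fun j => (j.+1%:Z) ^+ d) =
   S m (fun j => \sum_(e < d.+1) ('C(d, e))%:Z * (j%:Z ^+ e)).
  rewrite /S; apply: eq_bigr => j _; congr (_ * _).
  rewrite -addn1 PoszD exprD1n; apply: eq_bigr => e _.
  by rewrite -mulr_natl natz.
rewrite (Slin m d.+1 (fun e => ('C(d, e))%:Z) (fun e j => j%:Z ^+ e)).
rewrite big_ord_recr /= big1 ?add0r ?binn ?mul1r ?subrr //.
move=> e _; rewrite IH ?mulr0 //.
by apply: (leq_trans (ltn_ord e)).
Qed.

Lemma Spoly m (p : {poly int}) : (size p <= m)%N -> S m (fun j => p.[j%:Z]) = 0.
Proof.
move=> hp.
have -> : S m (fun j => p.[j%:Z]) = S m (fun j => \sum_(i < size p) p`_i * (j%:Z ^+ i)).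
  by rewrite /S; apply: eq_bigr => j _; rewrite horner_coef.
rewrite (Slin m (size p) (fun i => p`_i) (fun i j => j%:Z ^+ i)) big1 // => i _; rewrite Smono ?mulr0 //.
exact: (leq_trans (ltn_ord i)).
Qed.
Lemma Posz_prod k (f : nat -> nat) : (\prod_(t < k) f t)%N%:Z = \prod_(t < k) (f t)%:Z.
Proof.
elim: k => [|k IH]; first by rewrite !big_ord0.
by rewrite !big_ord_recr /= PoszM IH.
Qed.

Theorem mainTheorem8 (n k : nat) (hn : (0 < n)%N) (hk : (0 < k)%N) :
  \sum_(1 <= i < k.+1) (-1) ^+ i * ('C(n * i + k - 1, k))%:Z * ('C(k.+1, i.+1))%:Z
  = (-1) ^+ k * ('C(n, k))%:Z :> int.
Proof.
set Q : {poly int} := \prod_(t < k) ((n%:Z)%:P * 'X + (t%:Z - n%:Z)%:P).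
have hQ x : Q.[x] = \prod_(t < k) (n%:Z * x + (t%:Z - n%:Z)).
  by rewrite /Q horner_prod; apply: eq_bigr => t _; rewrite !hornerE.
have hF (t : 'I_k) : size ((n%:Z)%:P * 'X + (t%:Z - n%:Z)%:P) = 2%N.
  rewrite size_MXaddC polyC_eq0 size_polyC.
  by have -> : (n%:Z == 0) = false by apply/eqP; lia.
have sQ : size Q = k.+1.
  rewrite /Q size_prod; last by move=> t _; rewrite -size_poly_eq0 hF.
  under eq_bigr => t _ do rewrite hF.
  rewrite sum_nat_const card_ord; lia.
have := Spoly (k.+1) Q (eq_leq sQ).
rewrite /S big_ord_recl big_ord_recl /=.
rewrite /bump /= !add1n expr0 bin0 mul1r.
have h0 : Q.[0] = (-1) ^+ k * (k`! * 'C(n, k))%N%:Z.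
  rewrite hQ.
  transitivity (\prod_(t < k) (-1 * (n%:Z - t%:Z))).
    by apply: eq_bigr => t _; ring.
  by rewrite big_split /= prod_neg prodr_const card_ord mulnC bin_ffact.
have h1 : Q.[1] = 0.
  rewrite hQ; case: k hk {hQ hF sQ h0 Q} => // k' _.
  by rewrite big_ord_recl /= mulr1 add0r subrr mul0r.
have h2 (i : nat) : Q.[(i.+2)%:Z] = (k`! * 'C(n * i.+1 + k - 1, k))%N%:Z.
  rewrite hQ.
  transitivity (\prod_(t < k) ((n * i.+1 + t)%N%:Z)).
    apply: eq_bigr => t _; rewrite PoszD PoszM; ring.
  rewrite -Posz_prod prod_rise; last by rewrite muln_gt0 hn.
  by rewrite -bin_ffact mulnC.
rewrite h0 h1 mulr0 add0r.
under eq_bigr => i _ do rewrite h2.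
rewrite big_add1 /= big_mkord.
set T := \sum_(i < k) _.
move=> H.
apply: (@mulfI _ (k`!%:Z)); first by rewrite eqz_nat -lt0n fact_gt0.
have -> : k`!%:Z * \sum_(i < k) (-1) ^+ i.+1 * ('C(n * i.+1 + k - 1, k))%:Z * ('C(k.+1, i.+2))%:Z = - T.
  rewrite /T mulr_sumr -sumrN; apply: eq_bigr => i _.
  rewrite !add1n PoszM !exprS; ring.
move: H; rewrite PoszM mul1r => /(canRL (addKr _)) ->.
ring.
Qed.
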